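(* In the setting of the context, for every fixed $j\ge0$, $$\pi_{i,j}\sim\frac{C^j\pi_{0,0}}{j!}\,i^{j}r_0^{\,i}\qquad\text{as } i\to\infty,$$ where $$C=\frac{q}{\bar q}\cdot\frac{\bar p\mu_hr_0^2+(p\mu_h+\bar p\bar\mu_h)r_0+p\bar\mu_h}{p\bar\mu_h-\bar p\mu_hr_0^2}.$$
   Context: Fix $p,q,\mu_h,\mu_l\in(0,1)$ with $p+q+\mu_h+\mu_l=1$ and $\mu_l\le\mu_h$. For real $x$ write $\bar x=1-x$; let $\rho=p/\mu_h+q/\mu_l$ and assume $\rho<1$. Let $(Q_1(n),Q_2(n))_{n\ge0}$ be the discrete-time Markov chain on $\mathbb{Z}_{\ge0}^2$ (numbers of high- and low-priority customers in a discrete-time preemptive priority queue, early arrival system) whose one-step transition probabilities from $(i,j)$ to $(i+k,j+l)$ are as follows (unlisted transitions have probability $0$). If $i\ge1$, $j\ge0$: $(k,l)=(1,0)$: $p\bar q\bar\mu_h$; $(1,1)$: $pq\bar\mu_h$; $(0,1)$: $pq\mu_h+\bar pq\bar\mu_h$; $(-1,1)$: $\bar pq\mu_h$; $(-1,0)$: $\bar p\bar q\mu_h$; $(0,0)$: $\bar p\bar q\bar\mu_h+p\bar q\mu_h$. If $i=0$, $j\ge1$: $(1,0)$: $p\bar q\bar\mu_h$; $(1,1)$: $pq\bar\mu_h$; $(0,1)$: $pq\mu_h+\bar pq\bar\mu_l$; $(0,-1)$: $\bar p\bar q\mu_l$; $(0,0)$: $\bar p\bar q\bar\mu_l+p\bar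 q\mu_h+\bar pq\mu_l$. If $(i,j)=(0,0)$: $(1,0)$: $p\bar q\bar\mu_h$; $(1,1)$: $pq\bar\mu_h$; $(0,1)$: $pq\mu_h+\bar pq\bar\mu_l$; $(0,0)$: $\bar p\bar q+p\bar q\mu_h+\bar pq\mu_l$. Let $(\pi_{i,j})_{i,j\ge0}$ be its stationary distribution; $f(n)\sim g(n)$ means $f(n)/g(n)\to1$. Let $r_0=1/x_1(0)$, where $x_1(0)=\frac{1-(p\mu_h+\bar p\bar\mu_h)\bar q+\sqrt{\Delta(0)}}{2p\bar\mu_h\bar q}$ with $\Delta(0)=(p\mu_h-\bar p\bar\mu_h)^2\bar q^2-2(p\mu_h+\bar p\bar\mu_h)\bar q+1>0$ and the positive square root. *)

(* Defs.v *)
From Stdlib Require Import Reals ZArith Bool.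
From Coquelicot Require Import Coquelicot.
Open Scope R_scope.

Definition bar (x : R) : R := 1 - x.

Definition isd (k l a b : Z) : bool := Z.eqb k a && Z.eqb l b.

(* One-step transition probability of the chain from (i,j) to (i',j')
   (high-priority count i, low-priority count j), exactly as listed in the
   paper; every unlisted transition has probability 0. *)
Definition trans (p q mh ml : R) (i j i' j' : nat) : R :=
  let k := (Z.of_nat i' - Z.of_nat i)%Z in
  let l := (Z.of_nat j' - Z.of_nat j)%Z in
  if (1 <=? i)%nat then
    if isd k l 1 0 then p * bar q * bar mh
    else if isd k l 1 1 then p * q * bar mh
    else if isd k l 0 1 then p * q * mh + bar p * q * bar mh
    else if isd k l (-1) 1 then bar p * q * mh
    else if isd k l (-1) 0 then bar p * bar q * mh
    else if isd k l 0 0 then bar p * bar q * bar mh + p * bar q * mh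
    else 0
  else if (1 <=? j)%nat then
    if isd k l 1 0 then p * bar q * bar mh
    else if isd k l 1 1 then p * q * bar mh
    else if isd k l 0 1 then p * q * mh + bar p * q * bar ml
    else if isd k l 0 (-1) then bar p * bar q * ml
    else if isd k l 0 0 then bar p * bar q * bar ml + p * bar q * mh + bar p * q * ml
    else 0
  else
    if isd k l 1 0 then p * bar q * bar mh
    else if isd k l 1 1 then p * q * bar mh
    else if isd k l 0 1 then p * q * mh + bar p * q * bar ml
    else if isd k l 0 0 then bar p * bar q + p * bar q * mh + bar p * q * ml
    else 0.

(* Since all jumps have coordinates changing by
   at most 1, every x with P(x,(i,j)) <> 0 lies in the box [0,i+1]x[0,j+1],
   so the sum over all x equals the finite sum over that box. The total mass
   of a nonnegative array equals the limit of its square partial sums. *)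
Definition stationary (p q mh ml : R) (pi : nat -> nat -> R) : Prop :=
  (forall i j, 0 <= pi i j) /\
  is_lim_seq (fun N => sum_f_R0 (fun i => sum_f_R0 (fun j => pi i j) N) N) 1 /\
  (forall i j, pi i j =
     sum_f_R0 (fun a => sum_f_R0 (fun b => pi a b * trans p q mh ml a b i j)
                                 (S j)) (S i)).

Definition Delta0 (p q mh : R) : R :=
  (p * mh - bar p * bar mh) ^ 2 * bar q ^ 2 - 2 * (p * mh + bar p * bar mh) * bar q + 1.

Definition x10 (p q mh : R) : R :=
  (1 - (p * mh + bar p * bar mh) * bar q + sqrt (Delta0 p q mh))
  / (2 * p * bar mh * bar q).

Definition r0 (p q mh : R) : R := 1 / x10 p q mh.

Definition Cconst (p q mh : R) : R :=
  let r := r0 p q mh in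
  (q / bar q) *
  ((bar p * mh * r ^ 2 + (p * mh + bar p * bar mh) * r + p * bar mh)
   / (p * bar mh - bar p * mh * r ^ 2)).

(* Main.v *)
Require Import Defs.
From Stdlib Require Import Reals.
From Coquelicot Require Import Coquelicot.
From Stdlib Require Import Lra Lia Psatz ZArith.
Open Scope R_scope.

Lemma lim_inv_lin t : 0 < t -> is_lim_seq (fun n => / (INR n + t)) 0.
Proof.
  intros Ht.
  assert (H : is_lim_seq (fun n => INR n + t) p_infty).
  { eapply is_lim_seq_plus. apply is_lim_seq_INR. apply is_lim_seq_const. reflexivity. }
  apply (is_lim_seq_inv _ _ H). discriminate.
Qed.

Lemma lim_frac s t : 0 < t -> is_lim_seq (fun n => (INR n + s)/(INR n + t)) 1.
Proof.
  intros Ht.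
  assert (H := is_lim_seq_scal_l _ (s - t) _ (lim_inv_lin t Ht)).
  assert (H2 := is_lim_seq_plus' _ _ 1 _ (is_lim_seq_const 1) H).
  simpl in H2. replace (1 + (s - t) * 0) with 1 in H2 by ring.
  eapply is_lim_seq_ext; [|exact H2]. intros n. simpl.
  assert (0 <= INR n) by apply pos_INR. field. lra.
Qed.

Lemma lim_pow_lim (u : nat -> R) (l : R) (m : nat) : is_lim_seq u l -> is_lim_seq (fun n => u n ^ m) (l ^ m).
Proof.
  intros H. induction m as [|m IH]; simpl.
  - apply is_lim_seq_const.
  - apply is_lim_seq_mult'; auto.
Qed.

Lemma lim_frac_pow s t m : 0 < t -> is_lim_seq (fun n => ((INR n + s)/(INR n + t))^m) 1.
Proof.
  intros Ht. replace 1 with (1 ^ m) by apply pow1. apply lim_pow_lim. apply lim_frac; auto.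
Qed.

Lemma stolz00 (A B : nat -> R) (L : R) (N0 : nat) :
  is_lim_seq A 0 -> is_lim_seq B 0 -> (forall n, (N0 <= n)%nat -> B (S n) < B n) ->
  is_lim_seq (fun n => (A (S n) - A n)/(B (S n) - B n)) L ->
  is_lim_seq (fun n => A n / B n) L.
Proof.
  intros HA HB Hdec HR.
  assert (HAB : is_lim_seq (fun n => A n - L * B n) 0).
  { replace 0 with (0 - L * 0) by ring. apply is_lim_seq_minus'; auto.
    apply (is_lim_seq_scal_l _ L 0) in HB. simpl in HB. exact HB. }
  rewrite is_lim_seq_Reals in HAB, HB, HR |- *.
  assert (Hmono : forall n d, (N0 <= n)%nat -> B (n + S d)%nat < B n).
  { intros n d Hn. induction d as [|d IH].
    - replace (n + 1)%nat with (S n) by lia. apply Hdec; auto.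
    - replace (n + S (S d))%nat with (S (n + S d)) by lia.
      eapply Rlt_trans; [apply Hdec; lia|exact IH]. }
  assert (Hpos : forall n, (N0 <= n)%nat -> 0 < B n).
  { intros n Hn. destruct (Rlt_le_dec 0 (B n)) as [h|h]; auto.
    exfalso. assert (h1 : B (n + 1)%nat < B n) by (apply (Hmono n 0%nat); auto).
    destruct (HB (- B (n+1)%nat)) as [N HN]. lra.
    specialize (HN (n + S N)%nat ltac:(lia)). unfold R_dist in HN.
    assert (h2 : B (n + S N)%nat <= B (n+1)%nat).
    { destruct N. replace (n + 1)%nat with (n + S 0)%nat by lia. lra.
      replace (n + S (S N))%nat with ((n+1) + S N)%nat by lia.
      left. apply Hmono. lia. }
    rewrite Rminus_0_r in HN. apply Rabs_def2 in HN. lra. }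
  intros eps He.
  destruct (HR (eps/2)) as [N1 HN1]. lra.
  exists (max N0 N1). intros n Hn.
  assert (HBn : 0 < B n) by (apply Hpos; lia).
  assert (Htel : forall d, Rabs (A (n+d)%nat - A n - L * (B (n+d)%nat - B n)) <= eps/2 * (B n - B (n+d)%nat)).
  { induction d as [|d IH].
    - rewrite Nat.add_0_r. replace (A n - A n - L * (B n - B n)) with 0 by ring.
      rewrite Rabs_R0. lra.
    - replace (n + S d)%nat with (S (n+d)) by lia.
      set (k := (n + d)%nat) in *.
      assert (Hk : (N1 <= k)%nat) by (unfold k; lia).
      assert (Hdk : B (S k) < B k) by (apply Hdec; unfold k; lia).
      specialize (HN1 k Hk). unfold R_dist in HN1.
      assert (E : A (S k) - A k - L * (B (S k) - B k) =
                  ((A (S k) - A k) / (B (S k) - B k) - L) * (B (S k) - B k)).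
      { field. lra. }
      assert (H1 : Rabs (A (S k) - A k - L * (B (S k) - B k)) <= eps/2 * (B k - B (S k))).
      { rewrite E, Rabs_mult. rewrite (Rabs_left (B (S k) - B k)) by lra.
        replace (eps/2 * (B k - B (S k))) with (eps/2 * (- (B (S k) - B k))) by ring.
        apply Rmult_le_compat_r; lra. }
      replace (A (S k) - A n - L * (B (S k) - B n)) with
        ((A (S k) - A k - L * (B (S k) - B k)) + (A k - A n - L * (B k - B n))) by ring.
      eapply Rle_trans. apply Rabs_triang. lra. }
  destruct (HAB (eps/2 * B n)) as [N3 HN3]. nra.
  specialize (HN3 (n + N3)%nat ltac:(lia)). unfold R_dist in HN3. rewrite Rminus_0_r in HN3.
  specialize (Htel N3).
  assert (HBk : 0 <= B (n + N3)%nat).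
  { destruct N3. rewrite Nat.add_0_r. lra. left. apply Hpos. lia. }
  assert (Hm : Rabs (A n - L * B n) < eps * B n).
  { replace (A n - L * B n) with ((A (n + N3)%nat - L * B (n+N3)%nat)
        - (A (n + N3)%nat - A n - L * (B (n + N3)%nat - B n))) by ring.
    eapply Rle_lt_trans. apply Rabs_triang. rewrite Rabs_Ropp. nra. }
  unfold R_dist.
  replace (A n / B n - L) with ((A n - L * B n) / B n) by (field; lra).
  unfold Rdiv. rewrite Rabs_mult, Rabs_inv, (Rabs_right (B n)) by lra.
  apply (Rmult_lt_reg_r (B n)); auto. field_simplify; try lra.
Qed.

Definition Fd (m : nat) (x : R) : R := (x+1)^(S m) - x^(S m).

Lemma Fd_S m x : Fd (S m) x = (x+1)^(S m) + x * Fd m x.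
Proof. unfold Fd. simpl. ring. Qed.

Lemma Fd_pos m x : 0 <= x -> 0 < Fd m x.
Proof.
  intros Hx. induction m as [|m IH].
  - unfold Fd. simpl. lra.
  - rewrite Fd_S. assert (0 < (x+1)^(S m)) by (apply pow_lt; lra). nra.
Qed.

Lemma Fd_lim m : is_lim_seq (fun i => Fd m (INR i) / (INR i + 1)^m) (INR (S m)).
Proof.
  induction m as [|m IH].
  - simpl. eapply is_lim_seq_ext; [|apply is_lim_seq_const]. intros n; simpl. unfold Fd; simpl. field.
  - assert (H0 := lim_frac 0 1 Rlt_0_1).
    assert (H := is_lim_seq_plus' _ _ _ _ (is_lim_seq_const 1) (is_lim_seq_mult' _ _ _ _ H0 IH)).
    replace (INR (S (S m))) with (1 + 1 * INR (S m)) by (rewrite (S_INR (S m)); ring).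
    eapply is_lim_seq_ext; [|exact H]. intros n. simpl.
    rewrite Fd_S. assert (0 <= INR n) by apply pos_INR.
    assert (0 < (INR n + 1)^m) by (apply pow_lt; lra).
    simpl. field. lra.
Qed.

Lemma sum_tele (f : nat -> R) n : sum_f_R0 (fun k => f (S k) - f k) n = f (S n) - f O.
Proof. induction n; simpl; [ring|rewrite IHn; ring]. Qed.

Lemma cesaro_step (u d : nat -> R) (m : nat) (D : R) :
  (forall i, u (S i) = u i + d i) ->
  is_lim_seq (fun i => d i / (INR i + 1)^m) D ->
  is_lim_seq (fun n => u n / INR n ^ (S m)) (D / INR (S m)).
Proof.
  intros Hu Hd.
  assert (HF0 : forall k, 0 < Fd m (INR k)) by (intros; apply Fd_pos, pos_INR).
  assert (HB : is_lim_seq (fun k => d k / Fd m (INR k)) (D / INR (S m))).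
  { eapply is_lim_seq_ext; [|apply (is_lim_seq_div' _ _ _ _ Hd (Fd_lim m))].
    intros k. assert (0 <= INR k) by apply pos_INR.
    assert (0 < (INR k + 1)^m) by (apply pow_lt; lra). specialize (HF0 k).
    cbv beta. field. lra. apply not_0_INR; lia. }
  rewrite is_lim_seq_Reals in HB.
  assert (HC := Cesaro (fun k => Fd m (INR k)) _ _ HB HF0).
  assert (Hsum : forall n, sum_f_R0 (fun k => Fd m (INR k)) n = (INR n + 1)^(S m)).
  { intros n. rewrite (sum_eq _ (fun k => (fun j => INR j ^ (S m)) (S k) - (fun j => INR j ^ S m) k)).
    rewrite (sum_tele (fun j => INR j ^ (S m))). rewrite S_INR. simpl. ring.
    intros i _. unfold Fd. rewrite S_INR. reflexivity. }
  assert (Hsum2 : forall n, sum_f_R0 (fun k => Fd m (INR k) * (d k / Fd m (INR k))) n = u (S n) - u O).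
  { intros n. rewrite (sum_eq _ (fun k => u (S k) - u k)). apply (sum_tele u).
    intros i _. rewrite Hu. specialize (HF0 i). field. lra. }
  lapply HC.
  2:{ intros M. destruct (INR_unbounded M) as [N HN]. exists N. intros n Hn.
      rewrite Hsum. apply le_INR in Hn.
      assert (1 <= INR n + 1) by (assert (0 <= INR n) by apply pos_INR; lra).
      assert (INR n + 1 <= (INR n + 1) ^ (S m)).
      { rewrite <- (pow_1 (INR n + 1)) at 1. apply Rle_pow; auto. lia. }
      lra. }
  clear HC; intros HC.
  rewrite <- is_lim_seq_Reals in HC.
  apply is_lim_seq_incr_1.
  assert (H0 : is_lim_seq (fun n => u O * (/ (INR n + 1)) ^ (S m)) 0).
  { replace 0 with (u O * 0 ^ (S m)) by (simpl; ring).
    apply is_lim_seq_scal_l with (a := u O) (lu := Finite (0 ^ S m)).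
    apply lim_pow_lim. apply lim_inv_lin. lra. }
  assert (H := is_lim_seq_plus' _ _ _ _ HC H0).
  rewrite Rplus_0_r in H.
  eapply is_lim_seq_ext; [|exact H]. intros n. cbv beta.
  rewrite Hsum, Hsum2, S_INR, pow_inv.
  assert (0 < (INR n + 1) ^ (S m)) by (apply pow_lt; assert (0 <= INR n) by apply pos_INR; lra).
  field. lra.
Qed.

Lemma delta_rec (x g : nat -> R) (a b c r : R) :
  0 < c -> 0 < r -> c*r^2 - (1-b)*r + a = 0 ->
  (forall i, (1-b) * x (S i) = a * x i + c * x (S (S i)) + g i) ->
  forall i, x (S (S i)) / r^(S (S i)) - x (S i) / r^(S i) =
     a/(c*r^2) * (x (S i) / r^(S i) - x i / r^i) - g i / (c * r^(i+2)).
Proof.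
  intros Hc Hr Hq Hrec i.
  assert (Hri : 0 < r^i) by (apply pow_lt; auto).
  rewrite Nat.add_comm. simpl.
  assert (E: x (S (S i)) = ((1-b) * x (S i) - a * x i - g i)/c).
  { rewrite Hrec. field. lra. }
  rewrite E. assert (Hb : 1 - b = (c*r^2 + a)/r).
  { apply (Rmult_eq_reg_r r); [|lra]. unfold Rdiv. rewrite Rmult_assoc, Rinv_l; lra. }
  rewrite Hb. field. repeat split; lra.
Qed.

Lemma column0 (x : nat -> R) (a b c r : R) :
  0 < a -> 0 < c -> 0 < r < 1 -> c*r^2 - (1-b)*r + a = 0 -> c * r < a ->
  (forall i, Rabs (x i) <= 1) ->
  (forall i, (1-b) * x (S i) = a * x i + c * x (S (S i))) ->
  forall n, x n = x O * r^n.
Proof.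
  intros Ha Hc Hr Hq Har Hx Hrec.
  set (rho := a/(c*r^2)).
  assert (Hrho : 1 < rho * r).
  { unfold rho. apply (Rmult_lt_reg_r (c*r)). nra. field_simplify; nra. }
  set (d := fun i => x (S i) / r^(S i) - x i / r^i).
  assert (Hd : forall i, d (S i) = rho * d i).
  { intros i. unfold d. rewrite (delta_rec x (fun _ => 0) a b c r); try lra.
    unfold rho. unfold Rdiv. rewrite !Rmult_0_l. ring.
    intros j. rewrite Hrec. ring. }
  assert (Hdi : forall i, d i = rho ^ i * d O).
  { induction i; simpl. ring. rewrite Hd, IHi. ring. }
  assert (Hbd : forall i, Rabs (d i) <= 2 / r^(S i)).
  { intros i. unfold d.
    assert (h1 : 0 < r ^ i) by (apply pow_lt; lra).
    assert (h2 : r^(S i) <= r^i) by (simpl; nra).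
    assert (h3 : 0 < r^(S i)) by (apply pow_lt; lra).
    unfold Rminus. eapply Rle_trans. apply Rabs_triang. rewrite Rabs_Ropp.
    unfold Rdiv. rewrite !Rabs_mult, !Rabs_inv, (Rabs_right (r ^ S i)), (Rabs_right (r ^ i)) by lra.
    assert (Rabs (x (S i)) * / r ^ S i <= / r^(S i)).
    { rewrite <- (Rmult_1_l (/ r^(S i))) at 2. apply Rmult_le_compat_r; auto.
      left; apply Rinv_0_lt_compat; auto. }
    assert (Rabs (x i) * / r ^ i <= / r^(S i)).
    { apply Rle_trans with (/ r^i). rewrite <- (Rmult_1_l (/ r^i)) at 2. apply Rmult_le_compat_r; auto.
      left; apply Rinv_0_lt_compat; auto. apply Rinv_le_contravar; auto. }
    lra. }
  assert (Hd0 : d O = 0).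
  { apply Rabs_eq_0. apply Rle_antisym; [|apply Rabs_pos].
    apply Rnot_lt_le. intros Hpos.
    set (th := / (rho * r)).
    assert (Hth : 0 < th < 1).
    { unfold th. split. apply Rinv_0_lt_compat; lra. rewrite <- Rinv_1. apply Rinv_lt_contravar; lra. }
    assert (Hl : is_lim_seq (fun n => 2 / r * th ^ n) 0).
    { replace 0 with (2/r * 0) by ring. apply (is_lim_seq_scal_l _ _ 0). apply is_lim_seq_geom. rewrite Rabs_right; lra. }
    rewrite is_lim_seq_Reals in Hl. destruct (Hl _ Hpos) as [N HN].
    specialize (HN N (le_n N)). unfold R_dist in HN. rewrite Rminus_0_r in HN.
    specialize (Hbd N). rewrite Hdi, Rabs_mult in Hbd.
    assert (0 < rho ^ N) by (apply pow_lt; nra).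
    rewrite (Rabs_right (rho ^ N)) in Hbd by lra.
    assert (E : 2 / r ^ S N / rho ^ N = 2 / r * th ^ N).
    { unfold th. rewrite pow_inv. simpl. rewrite Rpow_mult_distr. field.
      assert (0 < rho) by nra. repeat split; try (apply pow_nonzero); lra. }
    assert (Rabs (d O) <= 2 / r ^ S N / rho ^ N).
    { assert (0 < rho) by nra. apply (Rmult_le_reg_l (rho ^ N)); auto.
      replace (rho^N * (2 / r^S N / rho^N)) with (2 / r^S N). lra.
      field; split; apply pow_nonzero; lra. }
    rewrite (Rabs_right (2 / r * th ^N)) in HN. lra.
    apply Rle_ge. apply Rmult_le_pos. apply Rlt_le, Rdiv_lt_0_compat; lra.
    apply pow_le; lra. }
  assert (Hu : forall n, x n / r^n = x O).
  { induction n. simpl. field. 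
    assert (d n = 0) by (rewrite Hdi, Hd0; ring). unfold d in H. simpl pow in IHn. lra. }
  intros n. specialize (Hu n). assert (0 < r^n) by (apply pow_lt; lra).
  rewrite <- Hu. field. lra.
Qed.

Lemma columnS (x g : nat -> R) (a b c r : R) (m : nat) (E : R) :
  0 < a -> 0 < c -> 0 < r < 1 -> c*r^2 - (1-b)*r + a = 0 -> c * r < a ->
  (forall i, Rabs (x i) <= 1) ->
  (forall i, (1-b) * x (S i) = a * x i + c * x (S (S i)) + g i) ->
  is_lim_seq (fun i => (g i / (c * r^(i+2))) / (INR i + 1)^m) E ->
  is_lim_seq (fun n => (x n / r^n) / INR n ^ (S m)) (E / (a/(c*r^2) - 1) / INR (S m)).
Proof.
  intros Ha Hc Hr Hq Har Hx Hrec HE.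
  set (rho := a/(c*r^2)).
  assert (Hrho : 1 < rho * r).
  { unfold rho. apply (Rmult_lt_reg_r (c*r)). nra. field_simplify; nra. }
  assert (Hrho1 : 1 < rho) by nra.
  set (d := fun i => x (S i) / r^(S i) - x i / r^i).
  set (e := fun i => g i / (c * r^(i+2))).
  assert (Hd : forall i, d (S i) = rho * d i - e i).
  { intros i. unfold d, e. rewrite (delta_rec x g a b c r); auto; lra. }
  assert (Hbd : forall i, Rabs (d i) <= 2 / r^(S i)).
  { intros i. unfold d.
    assert (h1 : 0 < r ^ i) by (apply pow_lt; lra).
    assert (h2 : r^(S i) <= r^i) by (simpl; nra).
    assert (h3 : 0 < r^(S i)) by (apply pow_lt; lra).
    unfold Rminus. eapply Rle_trans. apply Rabs_triang. rewrite Rabs_Ropp.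
    unfold Rdiv. rewrite !Rabs_mult, !Rabs_inv, (Rabs_right (r ^ S i)), (Rabs_right (r ^ i)) by lra.
    assert (Rabs (x (S i)) * / r ^ S i <= / r^(S i)).
    { rewrite <- (Rmult_1_l (/ r^(S i))) at 2. apply Rmult_le_compat_r; auto.
      left; apply Rinv_0_lt_compat; auto. }
    assert (Rabs (x i) * / r ^ i <= / r^(S i)).
    { apply Rle_trans with (/ r^i). rewrite <- (Rmult_1_l (/ r^i)) at 2. apply Rmult_le_compat_r; auto.
      left; apply Rinv_0_lt_compat; auto. apply Rinv_le_contravar; auto. }
    lra. }
  set (A := fun i => d i / rho ^ i).
  set (B := fun i => (INR i + 1)^m / rho ^ i).
  assert (Hrhop : forall i, 0 < rho ^ i) by (intros; apply pow_lt; lra).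
  assert (HBp : forall i, 0 < B i).
  { intros i. unfold B. apply Rdiv_lt_0_compat; auto. apply pow_lt.
    assert (0 <= INR i) by apply pos_INR. lra. }
  set (th := / (rho * r)).
  assert (Hth : 0 < th < 1).
  { unfold th. split. apply Rinv_0_lt_compat; lra. rewrite <- Rinv_1. apply Rinv_lt_contravar; lra. }
  assert (HA : is_lim_seq A 0).
  { assert (Hl : is_lim_seq (fun n => 2 / r * th ^ n) 0).
    { replace 0 with (2/r * 0) by ring. apply (is_lim_seq_scal_l _ _ 0). apply is_lim_seq_geom. rewrite Rabs_right; lra. }
    apply is_lim_seq_abs_0. apply (is_lim_seq_le_le (fun _ => 0) _ (fun n => 2 / r * th ^ n)); auto.
    2: apply is_lim_seq_const.
    intros n. split. apply Rabs_pos. unfold A. unfold Rdiv at 1. rewrite Rabs_mult, Rabs_inv, (Rabs_right (rho^n)) by (specialize (Hrhop n); lra).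
    specialize (Hbd n). specialize (Hrhop n).
    replace (2 / r * th ^ n) with (2 / r ^ S n / rho ^n).
    unfold Rdiv at 2. apply Rmult_le_compat_r; auto. left; apply Rinv_0_lt_compat; auto.
    unfold th. rewrite pow_inv. simpl. rewrite Rpow_mult_distr. field.
    repeat split; try (apply pow_nonzero); lra. }
  assert (Hq21 := lim_frac_pow 2 1 m Rlt_0_1).
  assert (HB : is_lim_seq B 0).
  { assert (Hs : ex_series (fun n => Rabs (B n))).
    { apply (ex_series_DAlembert B (/ rho)).
      rewrite <- Rinv_1. apply Rinv_lt_contravar; lra.
      intros n; specialize (HBp n); lra.
      replace (/ rho) with (1 * / rho) by ring.
      eapply is_lim_seq_ext; [|apply (is_lim_seq_scal_r _ (/ rho) _ Hq21)].
      intros n. cbv beta. unfold B. rewrite S_INR.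
      assert (0 <= INR n) by apply pos_INR.
      assert (0 < (INR n + 1)^m) by (apply pow_lt; lra).
      specialize (Hrhop n).
      rewrite Rabs_right.
      replace (INR n + 1 + 1) with (INR n + 2) by ring.
      unfold Rdiv at 1. rewrite Rpow_mult_distr, pow_inv. simpl. field. repeat split; lra.
      apply Rle_ge, Rlt_le, Rdiv_lt_0_compat. apply Rdiv_lt_0_compat. apply pow_lt. lra.
      simpl; nra. apply Rdiv_lt_0_compat; auto. }
    apply ex_series_lim_0 in Hs.
    eapply is_lim_seq_ext; [|exact Hs]. intros n. cbv beta. rewrite Rabs_right; auto.
    specialize (HBp n); lra. }
  assert (Hq21' := Hq21). rewrite is_lim_seq_Reals in Hq21'.
  destruct (Hq21' (rho - 1)) as [N0 HN0]. lra.
  assert (Hdec : forall n, (N0 <= n)%nat -> B (S n) < B n).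
  { intros n Hn. specialize (HN0 n Hn). unfold R_dist in HN0. apply Rabs_def2 in HN0.
    unfold B. rewrite S_INR.
    assert (0 <= INR n) by apply pos_INR.
    assert (0 < (INR n + 1)^m) by (apply pow_lt; lra).
    specialize (Hrhop n).
    replace (INR n + 1 + 1) with (INR n + 2) by ring.
    assert (((INR n + 2) / (INR n + 1)) ^ m < rho) by lra.
    unfold Rdiv in H1. rewrite Rpow_mult_distr, pow_inv in H1.
    simpl. apply (Rmult_lt_reg_r (rho * rho ^n)). nra.
    apply (Rmult_lt_reg_r (/ (INR n + 1)^m)). apply Rinv_0_lt_compat; auto.
    replace ((INR n + 2) ^ m / (rho * rho ^ n) * (rho * rho ^ n) * / (INR n + 1) ^ m)
      with ((INR n + 2) ^ m * / (INR n + 1) ^ m) by (field; lra).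
    replace ((INR n + 1) ^ m / rho ^ n * (rho * rho ^ n) * / (INR n + 1) ^ m) with rho by (field; lra).
    exact H1. }
  assert (HR : is_lim_seq (fun n => (A (S n) - A n) / (B (S n) - B n)) (E / (rho - 1))).
  { assert (HL := is_lim_seq_div' _ _ _ _ HE (is_lim_seq_minus' _ _ _ _ (is_lim_seq_const rho) Hq21)).
    lapply HL; [clear HL; intros HL|lra].
    eapply is_lim_seq_ext_loc; [|exact HL]. exists N0. intros n Hn.
    specialize (HN0 n Hn). unfold R_dist in HN0. apply Rabs_def2 in HN0.
    assert (Hp : ((INR n + 2) / (INR n + 1)) ^ m = (INR n + 2)^m / (INR n + 1)^m).
    { unfold Rdiv. rewrite Rpow_mult_distr, pow_inv. reflexivity. }
    assert (Hlt : (INR n + 2)^m / (INR n + 1)^m < rho) by lra.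
    assert (0 <= INR n) by apply pos_INR.
    assert (0 < (INR n + 1)^m) by (apply pow_lt; lra).
    specialize (Hrhop n).
    assert (Hlt2 : (INR n + 2)^m < rho * (INR n + 1)^m).
    { apply (Rmult_lt_reg_r (/ (INR n + 1)^m)). apply Rinv_0_lt_compat; auto.
      replace (rho * (INR n + 1) ^ m * / (INR n + 1) ^ m) with rho by (field; lra). exact Hlt. }
    cbv beta. rewrite Hp. unfold A, B. rewrite Hd, S_INR.
    replace (INR n + 1 + 1) with (INR n + 2) by ring.
    simpl. unfold e. assert (0 < r^(n+2)) by (apply pow_lt; lra). field. repeat split; try lra. }
  assert (HS := stolz00 A B _ N0 HA HB Hdec HR).
  assert (Hdl : is_lim_seq (fun i => d i / (INR i + 1)^m) (E / (rho - 1))).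
  { eapply is_lim_seq_ext; [|exact HS]. intros n. unfold A, B. cbv beta.
    specialize (Hrhop n). assert (0 <= INR n) by apply pos_INR.
    assert (0 < (INR n + 1)^m) by (apply pow_lt; lra). field. lra. }
  apply (cesaro_step (fun n => x n / r^n) d m). intros i. unfold d. ring.
  exact Hdl.
Qed.

Ltac zdes := repeat match goal with
  | |- context [Z.eqb ?x ?y] => destruct (Z.eqb_spec x y)
  | |- context [Nat.leb ?x ?y] => destruct (Nat.leb_spec x y)
  end.


Lemma tr_a (p q mh ml : R) i j : trans p q mh ml i j (S i) j = p * bar q * bar mh.
Proof. unfold trans, isd. rewrite Nat2Z.inj_succ. zdes; simpl; try lia; try reflexivity. Qed.

Lemma tr_b (p q mh ml : R) i j : trans p q mh ml (S i) j (S i) j = bar p * bar q * bar mh + p * bar q * mh.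
Proof. unfold trans, isd. zdes; simpl; try lia; try reflexivity. Qed.

Lemma tr_c (p q mh ml : R) i j : trans p q mh ml (S (S i)) j (S i) j = bar p * bar q * mh.
Proof. unfold trans, isd. rewrite !Nat2Z.inj_succ. zdes; simpl; try lia; try reflexivity. Qed.

Lemma tr_c0 (p q mh ml : R) i j : trans p q mh ml (S i) j i j = bar p * bar q * mh.
Proof. unfold trans, isd. rewrite !Nat2Z.inj_succ. zdes; simpl; try lia; try reflexivity. Qed.

Lemma tr_a' (p q mh ml : R) i j : trans p q mh ml i j (S i) (S j) = p * q * bar mh.
Proof. unfold trans, isd. rewrite !Nat2Z.inj_succ. zdes; simpl; try lia; try reflexivity. Qed.

Lemma tr_b' (p q mh ml : R) i j : trans p q mh ml (S i) j (S i) (S j) = p * q * mh + bar p * q * bar mh.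
Proof. unfold trans, isd. rewrite !Nat2Z.inj_succ. zdes; simpl; try lia; try reflexivity. Qed.

Lemma tr_c' (p q mh ml : R) i j : trans p q mh ml (S (S i)) j (S i) (S j) = bar p * q * mh.
Proof. unfold trans, isd. rewrite !Nat2Z.inj_succ. zdes; simpl; try lia; try reflexivity. Qed.

Lemma tr_down (p q mh ml : R) j : trans p q mh ml 0 (S j) 0 j = bar p * bar q * ml.
Proof. unfold trans, isd. rewrite !Nat2Z.inj_succ. zdes; simpl; try lia; try reflexivity. Qed.

Lemma tr_zero (p q mh ml : R) s t i j :
  ~ ((s = i \/ s = S i \/ s = S (S i)) /\ (t = j \/ S t = j)) ->
  trans p q mh ml s t (S i) j = 0.
Proof. intros H. unfold trans, isd. zdes; simpl; try lia; try reflexivity. Qed.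

Lemma tr_nonneg (p q mh ml : R) s t i j : 0 < p < 1 -> 0 < q < 1 -> 0 < mh < 1 -> 0 < ml < 1 ->
  0 <= trans p q mh ml s t i j.
Proof.
  intros Hp Hq Hm Hl. unfold bar in *.
  assert (0 < 1 - p) by lra. assert (0 < 1 - q) by lra. assert (0 < 1 - mh) by lra. assert (0 < 1 - ml) by lra.
  unfold trans, isd, bar. zdes; simpl;
  repeat match goal with
  | |- 0 <= ?x + ?y => apply Rplus_le_le_0_compat
  | |- 0 <= ?x * ?y => apply Rmult_le_pos
  end; lra.
Qed.


Lemma sum_zero (f : nat -> R) n : (forall t, (t <= n)%nat -> f t = 0) -> sum_f_R0 f n = 0.
Proof. intros H; induction n; simpl. apply H; lia. rewrite IHn, H; intros; try lia; try ring. apply H; lia. Qed.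

Lemma sum_single (f : nat -> R) k n : (k <= n)%nat -> (forall t, (t <= n)%nat -> t <> k -> f t = 0) -> sum_f_R0 f n = f k.
Proof.
  intros Hk H. induction n as [|n IH].
  - simpl. assert (k = 0)%nat by lia. subst; reflexivity.
  - simpl. destruct (Nat.eq_dec k (S n)).
    + subst. rewrite sum_zero. ring. intros t Ht. apply H; lia.
    + rewrite IH; try lia. rewrite (H (S n)) by lia. ring. intros; apply H; lia.
Qed.

Lemma sum_split_pt (f : nat -> R) k n : (k <= n)%nat ->
  sum_f_R0 f n = f k + sum_f_R0 (fun t => if Nat.eqb t k then 0 else f t) n.
Proof.
  intros Hk.
  rewrite (sum_eq f (fun t => (if Nat.eqb t k then f k else 0) + (if Nat.eqb t k then 0 else f t))).
  rewrite sum_plus. f_equal. rewrite (sum_single _ k); auto.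
  rewrite Nat.eqb_refl; auto. intros t _ Ht. apply Nat.eqb_neq in Ht. rewrite Ht. auto.
  intros t _. destruct (Nat.eqb_spec t k). subst. ring. ring.
Qed.

Lemma sum_le_term (f : nat -> R) k n : (k <= n)%nat -> (forall t, 0 <= f t) -> f k <= sum_f_R0 f n.
Proof.
  intros Hk H. induction n as [|n IH].
  - simpl. assert (k = 0)%nat by lia. subst; lra.
  - simpl. destruct (Nat.eq_dec k (S n)).
    + subst. assert (0 <= sum_f_R0 f n). { clear IH Hk. induction n; simpl. apply H. specialize (H (S n)). lra. }
      lra.
    + specialize (IH ltac:(lia)). specialize (H (S n)). lra.
Qed.

Lemma sum3 (f : nat -> R) i : (forall t, t <> i -> t <> S i -> t <> S (S i) -> f t = 0) ->
  sum_f_R0 f (S (S i)) = f i + f (S i) + f (S (S i)).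
Proof.
  intros H. simpl. rewrite (sum_single f i i); auto. intros t Ht Hne. apply H; lia.
Qed.

Definition Gterm (p q mh : R) (pi : nat -> nat -> R) (i j : nat) : R :=
  match j with O => 0 | S j' =>
    (p*q*bar mh) * pi i j' + (p*q*mh + bar p*q*bar mh) * pi (S i) j' + (bar p*q*mh) * pi (S (S i)) j' end.

Lemma bal_rec p q mh ml pi : stationary p q mh ml pi -> forall i j,
  pi (S i) j = (p*bar q*bar mh) * pi i j + (bar p*bar q*bar mh + p*bar q*mh) * pi (S i) j
     + (bar p*bar q*mh) * pi (S (S i)) j + Gterm p q mh pi i j.
Proof.
  intros [_ [_ Hb]] i j.
  rewrite (Hb (S i) j) at 1.
  set (row := fun a => sum_f_R0 (fun b => pi a b * trans p q mh ml a b (S i) j) (S j)).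
  change (sum_f_R0 row (S (S i)) = (p*bar q*bar mh) * pi i j + (bar p*bar q*bar mh + p*bar q*mh) * pi (S i) j + (bar p*bar q*mh) * pi (S (S i)) j + Gterm p q mh pi i j).
  rewrite sum3.
  2:{ intros t H1 H2 H3. unfold row. apply sum_zero. intros u _.
      rewrite tr_zero. ring. lia. }
  assert (Hrow : forall s, row s = pi s j * trans p q mh ml s j (S i) j +
      match j with O => 0 | S j' => pi s j' * trans p q mh ml s j' (S i) j end).
  { intros s. unfold row. destruct j as [|j'].
    - simpl. rewrite (tr_zero p q mh ml s 1 i 0). ring. lia.
    - rewrite sum3. rewrite (tr_zero p q mh ml s (S (S j')) i (S j')). ring. lia.
      intros t H1 H2 H3. rewrite tr_zero. ring. lia. }
  rewrite !Hrow. rewrite tr_a, tr_b, tr_c. unfold Gterm.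
  destruct j as [|j']. ring. rewrite tr_a', tr_b', tr_c'. ring.
Qed.

Lemma sum_nonneg (f : nat -> R) n : (forall t, 0 <= f t) -> 0 <= sum_f_R0 f n.
Proof. intros H; induction n; simpl; [apply H|specialize (H (S n)); lra]. Qed.

Lemma sum_mono (f g : nat -> R) n : (forall t, f t <= g t) -> sum_f_R0 f n <= sum_f_R0 g n.
Proof. intros H; induction n; simpl; [apply H|specialize (H (S n)); lra]. Qed.

Lemma pi_le1 p q mh ml pi : stationary p q mh ml pi -> forall i j, pi i j <= 1.
Proof.
  intros [Hnn [Hl _]] i j.
  set (SN := fun N => sum_f_R0 (fun i => sum_f_R0 (fun j => pi i j) N) N).
  assert (Hinc : forall N, SN N <= SN (S N)).
  { intros N. unfold SN. simpl sum_f_R0 at 2.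
    assert (0 <= sum_f_R0 (fun j0 : nat => pi (S N) j0) (S N)) by (apply sum_nonneg; auto).
    assert (sum_f_R0 (fun i0 => sum_f_R0 (fun j0 => pi i0 j0) N) N <=
            sum_f_R0 (fun i0 => sum_f_R0 (fun j0 => pi i0 j0) (S N)) N).
    { apply sum_mono. intros t. simpl. specialize (Hnn t (S N)). lra. }
    rewrite tech5. lra. }
  assert (H1 := is_lim_seq_incr_compare SN 1 Hl Hinc (max i j)).
  eapply Rle_trans; [|exact H1]. unfold SN.
  eapply Rle_trans; [|apply (sum_le_term _ i); [lia|intros; apply sum_nonneg; auto]].
  apply (sum_le_term (fun j => pi i j)); auto. lia.
Qed.

Lemma bal_lower p q mh ml pi a b i j : stationary p q mh ml pi ->
  0 < p < 1 -> 0 < q < 1 -> 0 < mh < 1 -> 0 < ml < 1 ->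
  (a <= S i)%nat -> (b <= S j)%nat -> pi a b * trans p q mh ml a b i j <= pi i j.
Proof.
  intros Hst Hp Hq Hm Hml Ha Hb. destruct Hst as [Hnn [_ Hbal]].
  rewrite (Hbal i j).
  assert (Ht : forall a b, 0 <= pi a b * trans p q mh ml a b i j).
  { intros. apply Rmult_le_pos; auto. apply tr_nonneg; auto. }
  eapply Rle_trans; [|apply (sum_le_term _ a); auto; intros; apply sum_nonneg; auto].
  apply (sum_le_term (fun b => pi a b * trans p q mh ml a b i j)); auto.
Qed.

Lemma pi00_pos p q mh ml pi : stationary p q mh ml pi ->
  0 < p < 1 -> 0 < q < 1 -> 0 < mh < 1 -> 0 < ml < 1 -> 0 < pi O O.
Proof.
  intros Hst Hp Hq Hm Hml.
  destruct (Rlt_le_dec 0 (pi O O)) as [h|h]; auto. exfalso.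
  assert (Hnn := proj1 Hst).
  assert (Hcp : 0 < bar p * bar q * mh) by (unfold bar; repeat apply Rmult_lt_0_compat; lra).
  assert (Hdp : 0 < bar p * bar q * ml) by (unfold bar; repeat apply Rmult_lt_0_compat; lra).
  assert (H0 : forall j, pi O j = 0).
  { induction j. specialize (Hnn O O); lra.
    assert (h1 := bal_lower p q mh ml pi 0 (S j) 0 j Hst Hp Hq Hm Hml ltac:(lia) ltac:(lia)).
    rewrite tr_down in h1. specialize (Hnn O (S j)). nra. }
  assert (Hall : forall i j, pi i j = 0).
  { induction i. auto. intros j.
    assert (h1 := bal_lower p q mh ml pi (S i) j i j Hst Hp Hq Hm Hml ltac:(lia) ltac:(lia)).
    rewrite tr_c0 in h1. specialize (Hnn (S i) j). rewrite IHi in h1. nra. }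
  destruct Hst as [_ [Hl _]].
  assert (Hl0 : is_lim_seq (fun N => sum_f_R0 (fun i => sum_f_R0 (fun j => pi i j) N) N) 0).
  { eapply is_lim_seq_ext; [|apply is_lim_seq_const]. intros N. cbv beta.
    symmetry. apply sum_zero. intros. apply sum_zero. intros. auto. }
  apply is_lim_seq_unique in Hl, Hl0. rewrite Hl in Hl0. injection Hl0. lra.
Qed.

Lemma r0_facts p q mh : 0 < p < 1 -> 0 < q < 1 -> 0 < mh < 1 ->
  let a := p*bar q*bar mh in let b := bar p*bar q*bar mh + p*bar q*mh in
  let c := bar p*bar q*mh in let r := r0 p q mh in
  0 < r < 1 /\ c*r^2 - (1-b)*r + a = 0 /\ c * r < a.
Proof.
  intros Hp Hq Hm a b c r.
  assert (Ha : 0 < a) by (unfold a, bar; repeat apply Rmult_lt_0_compat; lra).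
  assert (Hc : 0 < c) by (unfold c, bar; repeat apply Rmult_lt_0_compat; lra).
  assert (HT : 1 - (p*mh + bar p*bar mh)*bar q = q + a + c) by (unfold a, c, bar; ring).
  assert (Hb : 1 - b = q + a + c) by (unfold a, b, c, bar; ring).
  assert (HD : Delta0 p q mh = (q + a + c)^2 - 4*a*c) by (unfold Delta0, a, c, bar; ring).
  assert (HDp : 0 < Delta0 p q mh).
  { rewrite HD. replace ((q + a + c)^2 - 4*a*c) with (q*q + 2*q*(a+c) + (a-c)^2) by ring.
    assert (0 <= (a-c)^2) by (apply pow2_ge_0). assert (0 < q*q) by nra. nra. }
  set (s := sqrt (Delta0 p q mh)).
  assert (Hs0 : 0 <= s) by apply sqrt_pos.
  assert (Hs2 : s * s = (q + a + c)^2 - 4*a*c) by (unfold s; rewrite sqrt_sqrt; lra).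
  assert (Hr : r = 2*a/(q + a + c + s)).
  { unfold r, r0, x10. fold s. rewrite HT. unfold a. field. fold a.
    unfold bar; repeat split; lra. }
  rewrite Hb.
  assert (h1 : a - c - q < s).
  { destruct (Rlt_le_dec (a - c - q) 0). lra.
    assert ((a - c - q)^2 < s * s) by (rewrite Hs2; nra). nra. }
  assert (h2 : c - a - q < s).
  { destruct (Rlt_le_dec (c - a - q) 0). lra.
    assert ((c - a - q)^2 < s * s) by (rewrite Hs2; nra). nra. }
  assert (Hden : 0 < q + a + c + s) by lra.
  rewrite Hr. repeat split.
  - apply Rdiv_lt_0_compat; lra.
  - apply (Rmult_lt_reg_r (q+a+c+s)); auto. field_simplify; lra.
  - set (T := q + a + c) in *.
    assert (HQ : c*(2*a)^2 - T*(2*a)*(T+s) + a*(T+s)^2 = 0).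
    { replace (c*(2*a)^2 - T*(2*a)*(T+s) + a*(T+s)^2) with (a*(4*a*c - T^2 + s*s)) by ring.
      rewrite Hs2. ring. }
    replace (c * (2 * a / (T + s)) ^ 2 - T * (2 * a / (T + s)) + a) with
      ((c*(2*a)^2 - T*(2*a)*(T+s) + a*(T+s)^2) / (T+s)^2) by (field; lra).
    rewrite HQ. unfold Rdiv. ring.
  - apply (Rmult_lt_reg_r (q+a+c+s)); auto. field_simplify; nra.
Qed.

Theorem theorem6p1 (p q mh ml : R) (pi : nat -> nat -> R) :
  0 < p < 1 -> 0 < q < 1 -> 0 < mh < 1 -> 0 < ml < 1 ->
  p + q + mh + ml = 1 -> ml <= mh ->
  p / mh + q / ml < 1 ->
  stationary p q mh ml pi ->
  forall j : nat,
    is_lim_seq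
      (fun i : nat =>
         pi i j /
         (Cconst p q mh ^ j * pi 0%nat 0%nat / INR (Factorial.fact j)
          * INR i ^ j * r0 p q mh ^ i))
      1.
Proof.
  intros Hp Hq Hm Hml _ _ _ Hst.
  destruct (r0_facts p q mh Hp Hq Hm) as [Hr [Hquad Har]].
  set (a := p*bar q*bar mh) in *. set (b := bar p*bar q*bar mh + p*bar q*mh) in *.
  set (c := bar p*bar q*mh) in *. set (r := r0 p q mh) in *.
  set (a1 := p*q*bar mh). set (b1 := p*q*mh + bar p*q*bar mh). set (c1 := bar p*q*mh).
  assert (Ha : 0 < a) by (unfold a, bar; repeat apply Rmult_lt_0_compat; lra).
  assert (Hc : 0 < c) by (unfold c, bar; repeat apply Rmult_lt_0_compat; lra).
  assert (Ha1 : 0 < a1) by (unfold a1, bar; repeat apply Rmult_lt_0_compat; lra).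
  assert (Hb1 : 0 < b1) by (unfold b1, bar; apply Rplus_lt_0_compat; repeat apply Rmult_lt_0_compat; lra).
  assert (Hc1 : 0 < c1) by (unfold c1, bar; repeat apply Rmult_lt_0_compat; lra).
  assert (Hacr : 0 < a - c * r^2) by nra.
  set (C := Cconst p q mh).
  assert (HC : C = (a1 + b1*r + c1*r^2)/(a - c*r^2)).
  { unfold C, Cconst. fold r. unfold a, c, a1, b1, c1 in *. unfold bar in *. field.
    assert (Hx : 0 < p * (1 - mh) - (1 - p) * mh * r ^ 2).
    { apply (Rmult_lt_reg_l (1-q)). lra. rewrite Rmult_0_r.
      replace ((1 - q) * (p * (1 - mh) - (1 - p) * mh * r ^ 2)) with
        (p * (1 - q) * (1 - mh) - (1 - p) * (1 - q) * mh * r ^ 2) by ring. exact Hacr. }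
    repeat split; lra. }
  assert (HCp : 0 < C) by (rewrite HC; apply Rdiv_lt_0_compat; nra).
  assert (H00 := pi00_pos p q mh ml pi Hst Hp Hq Hm Hml).
  assert (Hnn := proj1 Hst).
  assert (Hle := pi_le1 p q mh ml pi Hst).
  assert (Habs : forall i j, Rabs (pi i j) <= 1).
  { intros i j. rewrite Rabs_right. auto. apply Rle_ge; auto. }
  assert (Hrec := bal_rec p q mh ml pi Hst). fold a b c in Hrec.
  set (K := fun j => C^j * pi O O / INR (Factorial.fact j)).
  assert (Hfact : forall j, 0 < INR (Factorial.fact j)) by (intros; apply lt_0_INR, Factorial.lt_O_fact).
  assert (HK : forall j, 0 < K j).
  { intros j. unfold K. apply Rdiv_lt_0_compat; auto. apply Rmult_lt_0_compat; auto. apply pow_lt; auto. }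
  assert (Main : forall j, is_lim_seq (fun n => (pi n j / r^n) / INR n ^ j) (K j)).
  { induction j as [|j IH].
    - assert (Hrec0 : forall i, (1-b) * pi (S i) O = a * pi i O + c * pi (S (S i)) O).
      { intros i. specialize (Hrec i O). simpl in Hrec. lra. }
      assert (Hcol := column0 (fun i => pi i O) a b c r Ha Hc Hr Hquad Har (fun i => Habs i O) Hrec0).
      eapply is_lim_seq_ext; [|apply is_lim_seq_const]. intros n. cbv beta. rewrite Hcol.
      unfold K. assert (0 < r^n) by (apply pow_lt; lra). simpl. field. lra.
    - assert (HrecS : forall i, (1-b) * pi (S i) (S j) = a * pi i (S j) + c * pi (S (S i)) (S j) + Gterm p q mh pi i (S j)).
      { intros i. specialize (Hrec i (S j)). lra. }
      set (v := fun n => pi n j / r^n).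
      assert (L0 : is_lim_seq (fun i => v i / (INR i + 1)^j) (K j)).
      { assert (H := is_lim_seq_mult' _ _ _ _ IH (lim_frac_pow 0 1 j Rlt_0_1)).
        rewrite Rmult_1_r in H. eapply is_lim_seq_ext_loc; [|exact H].
        exists 1%nat. intros n Hn. unfold v. cbv beta.
        assert (0 < INR n) by (apply lt_0_INR; lia). rewrite Rplus_0_r.
        assert (Hpw : (INR n/(INR n+1))^j = INR n^j / (INR n + 1)^j) by (unfold Rdiv; rewrite Rpow_mult_distr, pow_inv; reflexivity).
        rewrite Hpw.
        assert (0 < INR n ^ j) by (apply pow_lt; auto).
        assert (0 < (INR n + 1) ^ j) by (apply pow_lt; lra).
        assert (0 < r ^ n) by (apply pow_lt; lra). field. lra. }
      assert (L1 : is_lim_seq (fun i => v (S i) / (INR i + 1)^j) (K j)).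
      { apply is_lim_seq_incr_1 in IH. eapply is_lim_seq_ext; [|exact IH].
        intros n. cbv beta. rewrite S_INR. reflexivity. }
      assert (L2 : is_lim_seq (fun i => v (S (S i)) / (INR i + 1)^j) (K j)).
      { apply (is_lim_seq_incr_n _ 2) in IH.
        assert (H := is_lim_seq_mult' _ _ _ _ IH (lim_frac_pow 2 1 j Rlt_0_1)).
        rewrite Rmult_1_r in H. eapply is_lim_seq_ext; [|exact H].
        intros n. cbv beta. replace (n + 2)%nat with (S (S n)) by lia.
        rewrite !S_INR. assert (0 <= INR n) by apply pos_INR.
        replace (INR n + 1 + 1) with (INR n + 2) by ring.
        assert (Hpw : ((INR n + 2)/(INR n+1))^j = (INR n + 2)^j / (INR n + 1)^j) by (unfold Rdiv; rewrite Rpow_mult_distr, pow_inv; reflexivity).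
        rewrite Hpw.
        assert (0 < (INR n + 2) ^ j) by (apply pow_lt; lra).
        assert (0 < (INR n + 1) ^ j) by (apply pow_lt; lra).
        unfold v. assert (0 < r^(S (S n))) by (apply pow_lt; lra). field. lra. }
      assert (HE : is_lim_seq (fun i => (Gterm p q mh pi i (S j) / (c * r^(i+2)))/(INR i + 1)^j)
                     (K j * (a1 + b1 * r + c1 * r^2)/(c*r^2))).
      { assert (H := is_lim_seq_plus' _ _ _ _ (is_lim_seq_plus' _ _ _ _
           (is_lim_seq_scal_l _ (a1/(c*r^2)) _ L0) (is_lim_seq_scal_l _ (b1/(c*r)) _ L1))
           (is_lim_seq_scal_l _ (c1/c) _ L2)).
        simpl in H. replace (K j * (a1 + b1 * r + c1 * r ^ 2) / (c * r ^ 2)) with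
          (a1 / (c * r ^ 2) * K j + b1 / (c * r) * K j + c1 / c * K j) by (field; lra).
        eapply is_lim_seq_ext; [|exact H]. intros n. cbv beta. unfold Gterm, v.
        fold a1 b1 c1.
        assert (0 <= INR n) by apply pos_INR.
        assert (0 < (INR n + 1) ^ j) by (apply pow_lt; lra).
        assert (0 < r ^ n) by (apply pow_lt; lra).
        rewrite Nat.add_comm. simpl. field. repeat split; lra. }
      assert (Hcol := columnS (fun i => pi i (S j)) (fun i => Gterm p q mh pi i (S j)) a b c r j _
                        Ha Hc Hr Hquad Har (fun i => Habs i (S j)) HrecS HE).
      replace (K (S j)) with (K j * (a1 + b1 * r + c1 * r ^ 2) / (c * r ^ 2) / (a / (c * r ^ 2) - 1) / INR (S j)).
      exact Hcol.
      unfold K. rewrite HC. change (Factorial.fact (S j)) with (S j * Factorial.fact j)%nat.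
      rewrite mult_INR. specialize (Hfact j).
      assert (0 < INR (S j)) by (apply lt_0_INR; lia).
      simpl pow. field. repeat split; try lra. }
  intros j.
  assert (H := is_lim_seq_div' _ _ _ _ (Main j) (is_lim_seq_const (K j))).
  lapply H; [clear H; intros H|specialize (HK j); lra].
  replace 1 with (K j / K j) by (field; specialize (HK j); lra).
  eapply is_lim_seq_ext_loc; [|exact H]. exists 1%nat. intros n Hn.
  assert (0 < INR n) by (apply lt_0_INR; lia).
  assert (0 < INR n ^ j) by (apply pow_lt; auto).
  assert (0 < r ^ n) by (apply pow_lt; lra).
  specialize (HK j). unfold K in *. cbv beta. field. repeat split; try lra.
  specialize (Hfact j); lra. apply pow_nonzero; lra.
  Qed.
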